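(* Let $\mathcal{G}^{\mathrm{aff}}$ be the family of all routing problems with affine latency functions, with homogeneous users. For a bound $\beta\ge0$, an optimal $\beta$-bounded tolling mechanism is $$T^{\mathrm{opt}+}(af+b;\beta)=\begin{cases}\beta a f & \beta\in[0,1),\\ a f & \beta\ge1,\end{cases}$$ with $$\mathrm{PoA}\big(\mathcal{G}^{\mathrm{aff}},T^{\mathrm{opt}+}(\beta)\big)=\begin{cases}\dfrac{4}{3+2\beta-\beta^2} & \beta\in[0,1),\\ 1 & \beta\ge1.\end{cases}$$ An optimal $\beta$-bounded subsidy mechanism is $$T^{\mathrm{opt}-}(af+b;\beta)=\begin{cases}-\beta b & \beta\in[0,1/2),\\ -b/2 & \beta\ge1/2,\end{cases}$$ with $$\mathrm{PoA}\big(\mathcal{G}^{\mathrm{aff}},T^{\mathrm{opt}-}(\beta)\big)=\begin{cases}\dfrac{4}{3+2\hat\beta-\hat\beta^2} & \beta\in[0,1/2),\\ 1 & \beta\ge1/2,\end{cases}\qquad \hat\beta=\frac{1}{1-\beta}-1.$$ Consequently, for every $\beta\in(0,1)$, $\mathrm{PoA}(\mathcal{G}^{\mathrm{aff}},T^{\mathrm{opt}+}(\beta))>\mathrm{PoA}(\mathcal{G}^{\mathrm{aff}},T^{\mathrm{opt}-}(\beta))$.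
   Context: A routing problem $G$ consists of a directed graph $(V,E)$, origin–destination pairs $(o_i,d_i)$ with traffic masses $r_i>0$, $\sum_ir_i=1$, and for each edge $e$ a latency function $\ell_e$; in $\mathcal{G}^{\mathrm{aff}}$ every latency has the form $\ell(f)=af+b$ with $a,b\ge0$, and $L(\mathcal{G}^{\mathrm{aff}})$ is the set of all such functions. Let $\mathcal{P}_i$ be the set of simple $o_i$–$d_i$ paths. A flow assigns mass $f_P\ge0$ to each path, is feasible if $\sum_{P\in\mathcal{P}_i}f_P=r_i$, and has edge flows $f_e=\sum_{P\ni e}f_P$; its total latency is $\mathcal{L}(f)=\sum_ef_e\ell_e(f_e)$ and $\mathcal{L}^{\mathrm{opt}}(G)$ is the minimum over feasible flows. Users form a continuum $N=\bigcup_iN_i$ of disjoint intervals of Lebesgue measure $r_i$, choosing paths in $\mathcal{P}_i$; users are homogeneous (sensitivity $1$). An incentive mechanism $T$ assigns to each latency $\ell$ a function $T(\ell):[0,1]\to\mathbb{R}$, and edge $e$ receives $\tau_e=T(\ell_e)$. A user on path $P$ under flow $f$ has cost $\sum_{e\in P}(\ell_e(f_e)+\tau_e(f_e))$; a Nash flow is a feasible flow in which every user uses a cost-minimizing path. $\mathcal{L}^{\mathrm{Nash}}(G,T)$ is the highest total latency of a Nash flow and $\mathrm{PoA}(\mathcal{G},T)=\sup_{G\in\mathcal{G}}\mathcal{L}^{\mathrm{Nash}}(G,T)/\mathcal{L}^{\mathrm{opt}}(G)$. A $\beta$-bounded tolling mechanism satisfies $T(\ell)[f]\in[0,\beta\ell(f)]$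 for all $f\in[0,1]$; a $\beta$-bounded subsidy mechanism satisfies $T(\ell)[f]\in[-\beta\ell(f),0]$. An optimal $\beta$-bounded tolling (subsidy) mechanism is one minimizing $\mathrm{PoA}(\mathcal{G}^{\mathrm{aff}},\cdot)$ over all $\beta$-bounded tolling (subsidy) mechanisms. *)

(* Defs.v *)
From Stdlib Require Import Reals Lra List.
Import ListNotations.
Open Scope R_scope.

Record Edge := mkEdge { tl : nat; hd : nat; ea : R; eb : R }.

Record Comm := mkComm { orig : nat; dest : nat; mass : R }.

(** A routing problem: vertices 0..nV-1, edges (indexed by their position
    in the list), commodities (indexed by their position in the list). *)
Record RP := mkRP { nV : nat; edges : list Edge; comms : list Comm }.

Definition dummy_edge : Edge := mkEdge 0 0 0 0.
Definition dummy_comm : Comm := mkComm 0 0 0.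

Definition edge (G : RP) (e : nat) : Edge := nth e (edges G) dummy_edge.
Definition comm (G : RP) (i : nat) : Comm := nth i (comms G) dummy_comm.
Definition nE (G : RP) : nat := length (edges G).
Definition nC (G : RP) : nat := length (comms G).

Definition sumR (l : list R) : R := fold_right Rplus 0 l.

Definition wf_RP (G : RP) : Prop :=
  (forall e, (e < nE G)%nat ->
      (tl (edge G e) < nV G)%nat /\ (hd (edge G e) < nV G)%nat /\
      0 <= ea (edge G e) /\ 0 <= eb (edge G e)) /\
  NoDup (map (fun x => (tl x, hd x)) (edges G)) /\
  (forall i, (i < nC G)%nat ->
      (orig (comm G i) < nV G)%nat /\ (dest (comm G i) < nV G)%nat /\
      0 < mass (comm G i)) /\
  sumR (map mass (comms G)) = 1.

(** Paths are lists of edge indices. [walk G u p d]: p is a walk from u to d. *)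
Fixpoint walk (G : RP) (u : nat) (p : list nat) (d : nat) : Prop :=
  match p with
  | [] => u = d
  | e :: p' => (e < nE G)%nat /\ tl (edge G e) = u /\ walk G (hd (edge G e)) p' d
  end.

Fixpoint verts (G : RP) (u : nat) (p : list nat) : list nat :=
  match p with
  | [] => [u]
  | e :: p' => u :: verts G (hd (edge G e)) p'
  end.

Definition is_path (G : RP) (o d : nat) (p : list nat) : Prop :=
  walk G o p d /\ NoDup (verts G o p).

Definition in_Paths (G : RP) (i : nat) (p : list nat) : Prop :=
  is_path G (orig (comm G i)) (dest (comm G i)) p.

(** A flow: finitely many entries (i, P, x) assigning mass x to path P of
    commodity i (repeated entries add up). *)
Definition Flow := list (nat * list nat * R).

Definition feasible (G : RP) (f : Flow) : Prop :=
  (forall i p x, In (i, p, x) f -> (i < nC G)%nat /\ in_Paths G i p /\ 0 <= x) /\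
  (forall i, (i < nC G)%nat ->
     sumR (map (fun t => match t with (j, _, x) => if Nat.eqb j i then x else 0 end) f)
       = mass (comm G i)).

Definition eflow (f : Flow) (e : nat) : R :=
  sumR (map (fun t => match t with (_, p, x) => if existsb (Nat.eqb e) p then x else 0 end) f).

Definition lat (G : RP) (e : nat) (y : R) : R := ea (edge G e) * y + eb (edge G e).

Definition total_latency (G : RP) (f : Flow) : R :=
  sumR (map (fun e => eflow f e * lat G e (eflow f e)) (seq 0 (nE G))).

(** * Incentive mechanisms
    A latency in L(G^aff) is l(f) = a f + b (a,b >= 0), determined by (a,b);
    a mechanism maps it to the function T a b : [0,1] -> R. *)
Definition Mechanism := R -> R -> R -> R.

(** Cost of path p under flow f for homogeneous users (sensitivity 1). *)
Definition path_cost (G : RP) (T : Mechanism) (f : Flow) (p : list nat) : R :=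
  sumR (map (fun e => lat G e (eflow f e)
                      + T (ea (edge G e)) (eb (edge G e)) (eflow f e)) p).

Definition Nash (G : RP) (T : Mechanism) (f : Flow) : Prop :=
  feasible G f /\
  forall i p x, In (i, p, x) f -> 0 < x ->
    forall q, in_Paths G i q -> path_cost G T f p <= path_cost G T f q.

Definition PoA_le (T : Mechanism) (v : R) : Prop :=
  forall G f g, wf_RP G -> Nash G T f -> feasible G g ->
    total_latency G f <= v * total_latency G g.

Definition PoA_is (T : Mechanism) (v : R) : Prop :=
  PoA_le T v /\ forall v', v' < v -> ~ PoA_le T v'.

Definition tolling_bounded (beta : R) (T : Mechanism) : Prop :=
  forall a b y, 0 <= a -> 0 <= b -> 0 <= y <= 1 ->
    0 <= T a b y <= beta * (a * y + b).

Definition subsidy_bounded (beta : R) (T : Mechanism) : Prop :=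
  forall a b y, 0 <= a -> 0 <= b -> 0 <= y <= 1 ->
    - (beta * (a * y + b)) <= T a b y <= 0.

(** T minimizes PoA among mechanisms satisfying [bnd]:
    PoA(T) <= PoA(T') for all admissible T' (as extended-real suprema). *)
Definition optimal_among (bnd : Mechanism -> Prop) (T : Mechanism) : Prop :=
  bnd T /\ forall T', bnd T' -> forall v, PoA_le T' v -> PoA_le T v.

Definition T_opt_plus (beta : R) : Mechanism :=
  fun a b y => if Rlt_dec beta 1 then beta * a * y else a * y.

Definition T_opt_minus (beta : R) : Mechanism :=
  fun a b y => if Rlt_dec beta (1/2) then - (beta * b) else - (b / 2).

Definition poa_plus (beta : R) : R :=
  if Rlt_dec beta 1 then 4 / (3 + 2 * beta - beta ^ 2) else 1.

Definition beta_hat (beta : R) : R := 1 / (1 - beta) - 1.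

Definition poa_minus (beta : R) : R :=
  if Rlt_dec beta (1/2) then 4 / (3 + 2 * beta_hat beta - (beta_hat beta) ^ 2) else 1.

(* Main.v *)
Require Import Defs.
From Stdlib Require Import Reals.
From Stdlib Require Import Lra Lia List Psatz.
Import ListNotations.
Open Scope R_scope.

Lemma sumR_app l1 l2 : sumR (l1 ++ l2) = sumR l1 + sumR l2.
Proof. induction l1; simpl; [lra| rewrite IHl1; lra]. Qed.

Lemma sumR_le {A} (F G : A -> R) l :
  (forall x, In x l -> F x <= G x) -> sumR (map F l) <= sumR (map G l).
Proof.
  induction l as [|a l IH]; simpl; intros H; [lra|].
  assert (F a <= G a) by (apply H; auto).
  assert (sumR (map F l) <= sumR (map G l)) by (apply IH; intros; apply H; auto).
  lra.
Qed.

Lemma sumR_ext {A} (F G : A -> R) l :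
  (forall x, In x l -> F x = G x) -> sumR (map F l) = sumR (map G l).
Proof.
  induction l as [|a l IH]; simpl; intros H; [lra|].
  rewrite (H a) by auto. rewrite IH; auto.
Qed.

Lemma sumR_plus {A} (F G : A -> R) l :
  sumR (map (fun x => F x + G x) l) = sumR (map F l) + sumR (map G l).
Proof. induction l as [|a l IH]; simpl; [lra|]. rewrite IH; lra. Qed.

Lemma sumR_minus {A} (F G : A -> R) l :
  sumR (map (fun x => F x - G x) l) = sumR (map F l) - sumR (map G l).
Proof. induction l as [|a l IH]; simpl; [lra|]. rewrite IH; lra. Qed.

Lemma sumR_scal {A} c (F : A -> R) l :
  sumR (map (fun x => c * F x) l) = c * sumR (map F l).
Proof. induction l as [|a l IH]; simpl; [lra|]. rewrite IH; lra. Qed.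

Lemma sumR_nonneg {A} (F : A -> R) l :
  (forall x, In x l -> 0 <= F x) -> 0 <= sumR (map F l).
Proof.
  induction l as [|a l IH]; simpl; intros H; [lra|].
  assert (0 <= F a) by (apply H; auto).
  assert (0 <= sumR (map F l)) by (apply IH; intros; apply H; auto). lra.
Qed.

Lemma sumR_zero {A} (F : A -> R) l :
  (forall x, In x l -> F x = 0) -> sumR (map F l) = 0.
Proof.
  induction l as [|a l IH]; simpl; intros H; [lra|].
  rewrite (H a) by auto. rewrite IH; auto. lra.
Qed.

Lemma sumR_swap {A B} (G : A -> B -> R) (la : list A) (lb : list B) :
  sumR (map (fun a => sumR (map (G a) lb)) la) =
  sumR (map (fun b => sumR (map (fun a => G a b) la)) lb).
Proof.
  induction la as [|a la IH]; simpl.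
  - symmetry; apply sumR_zero; auto.
  - rewrite IH. rewrite <- sumR_plus. reflexivity.
Qed.

Lemma sum_ind (j n : nat) (c : R) : (j < n)%nat ->
  sumR (map (fun i => if Nat.eqb j i then c else 0) (seq 0 n)) = c.
Proof.
  induction n; intros H; [lia|].
  rewrite seq_S, map_app, sumR_app. simpl.
  destruct (Nat.eqb_spec j n).
  - subst. rewrite sumR_zero. lra. intros i Hi. apply in_seq in Hi.
    destruct (Nat.eqb_spec n i); [lia|auto].
  - rewrite IHn by lia. lra.
Qed.

Lemma walk_lt G u p d : walk G u p d -> forall e, In e p -> (e < nE G)%nat.
Proof.
  revert u; induction p as [|e0 p IH]; simpl; intros u H e He; [contradiction|].
  destruct H as [H1 [H2 H3]]. destruct He as [<-|He]; auto. eapply IH; eauto.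
Qed.

Lemma walk_tl_in G u p d : walk G u p d -> forall e, In e p -> In (Defs.tl (edge G e)) (verts G u p).
Proof.
  revert u; induction p as [|e0 p IH]; simpl; intros u H e He; [contradiction|].
  destruct H as [H1 [H2 H3]]. destruct He as [<-|He]; [left; auto| right; eapply IH; eauto].
Qed.

Lemma path_nodup G u p d : walk G u p d -> NoDup (verts G u p) -> NoDup p.
Proof.
  revert u; induction p as [|e0 p IH]; simpl; intros u H Hn; [constructor|].
  destruct H as [H1 [H2 H3]]. apply NoDup_cons_iff in Hn as [Hn1 Hn2]. constructor.
  - intro Hin. apply Hn1. rewrite <- H2. eapply walk_tl_in; eauto.
  - eapply IH; eauto.
Qed.

Lemma sum_in_path (C : nat -> R) n p : NoDup p -> (forall e, In e p -> (e < n)%nat) ->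
  sumR (map (fun e => if existsb (Nat.eqb e) p then C e else 0) (seq 0 n)) = sumR (map C p).
Proof.
  induction p as [|a p IH]; intros Hn Hlt; simpl.
  - apply sumR_zero. auto.
  - apply NoDup_cons_iff in Hn as [Ha Hp].
    transitivity (sumR (map (fun e => (if Nat.eqb a e then C a else 0) +
        (if existsb (Nat.eqb e) p then C e else 0)) (seq 0 n))).
    + apply sumR_ext. intros e _.
      destruct (Nat.eqb_spec e a); destruct (Nat.eqb_spec a e); simpl; try lia.
      * subst a. destruct (existsb (Nat.eqb e) p) eqn:E.
        -- apply existsb_exists in E as [x [Hx Hx']]. apply Nat.eqb_eq in Hx'. subst. contradiction.
        -- lra.
      * lra.
    + rewrite sumR_plus. rewrite sum_ind by (apply Hlt; left; auto).
      rewrite IH; auto. intros; apply Hlt; right; auto.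
Qed.

Lemma flow_swap (C : nat -> R) n (h : Flow) :
  (forall i p x, In (i,p,x) h -> NoDup p /\ forall e, In e p -> (e<n)%nat) ->
  sumR (map (fun e => C e * eflow h e) (seq 0 n)) =
  sumR (map (fun t => match t with (_,p,x) => x * sumR (map C p) end) h).
Proof.
  intros Hh. unfold eflow.
  transitivity (sumR (map (fun e => sumR (map (fun t => C e *
     match t with (_,p,x) => if existsb (Nat.eqb e) p then x else 0 end) h)) (seq 0 n))).
  { apply sumR_ext. intros e _. rewrite sumR_scal. reflexivity. }
  rewrite sumR_swap. apply sumR_ext. intros [[j p] x] Hin.
  destruct (Hh j p x Hin) as [Hnd Hlt].
  rewrite <- sum_in_path with (n := n) (C := C) by auto.

  rewrite <- sumR_scal. apply sumR_ext. intros e _.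
  destruct (existsb (Nat.eqb e) p); ring.
Qed.

Lemma decomp (F : nat -> list nat -> R -> R) n (h : Flow) :
  (forall i p x, In (i,p,x) h -> (i<n)%nat) ->
  sumR (map (fun t => match t with (j,p,x) => F j p x end) h) =
  sumR (map (fun i => sumR (map (fun t => match t with (j,p,x) =>
      if Nat.eqb j i then F j p x else 0 end) h)) (seq 0 n)).
Proof.
  intros Hh. rewrite sumR_swap. apply sumR_ext. intros [[j p] x] Hin.
  rewrite sum_ind; auto. eapply Hh; eauto.
Qed.

Lemma pos_exists (f : Flow) i :
  0 < sumR (map (fun t => match t with (j,_,x) => if Nat.eqb j i then x else 0 end) f) ->
  exists p x, In (i,p,x) f /\ 0 < x.
Proof.
  induction f as [|[[j p] x] f IH]; simpl; intros H; [lra|].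
  destruct (Nat.eqb_spec j i).
  - subst. destruct (Rlt_or_le 0 x).
    + exists p, x; auto.
    + destruct IH as [p' [x' [H1 H2]]]; [lra|]. exists p', x'; auto.
  - destruct IH as [p' [x' [H1 H2]]]; [lra|]. exists p', x'; auto.
Qed.

Definition Ce (G : RP) (T : Mechanism) (f : Flow) (e : nat) : R :=
  lat G e (eflow f e) + T (ea (edge G e)) (eb (edge G e)) (eflow f e).

Lemma path_cost_Ce G T f p : path_cost G T f p = sumR (map (Ce G T f) p).
Proof. reflexivity. Qed.

Lemma feas_paths G h : feasible G h ->
  forall i p x, In (i,p,x) h -> NoDup p /\ forall e, In e p -> (e < nE G)%nat.
Proof.
  intros [H _] i p x Hin. destruct (H i p x Hin) as [_ [[Hw Hn] _]].
  split; [eapply path_nodup; eauto | eapply walk_lt; eauto].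
Qed.

Lemma VI G T f g : wf_RP G -> Nash G T f -> feasible G g ->
  sumR (map (fun e => Ce G T f e * eflow f e) (seq 0 (nE G))) <=
  sumR (map (fun e => Ce G T f e * eflow g e) (seq 0 (nE G))).
Proof.
  intros Hwf [Hf HN] Hg.
  rewrite !flow_swap by (eapply feas_paths; eauto).
  rewrite (decomp (fun j p x => x * sumR (map (Ce G T f) p)) (nC G) f)
    by (intros i p x Hin; destruct Hf as [H _]; apply (H i p x Hin)).
  rewrite (decomp (fun j p x => x * sumR (map (Ce G T f) p)) (nC G) g)
    by (intros i p x Hin; destruct Hg as [H _]; apply (H i p x Hin)).
  apply sumR_le. intros i Hi. apply in_seq in Hi. assert (Hi' : (i < nC G)%nat) by lia.
  destruct Hwf as [_ [_ [Hcm _]]].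
  destruct (Hcm i Hi') as [_ [_ Hm]].
  pose proof Hf as [Hf1 Hf2]. pose proof Hg as [Hg1 Hg2].
  destruct (pos_exists f i) as [p0 [x0 [Hin0 Hx0]]]; [rewrite Hf2; auto|].
  destruct (Hf1 _ _ _ Hin0) as [_ [Hp0 _]].
  set (d := sumR (map (Ce G T f) p0)).
  transitivity (d * sumR (map (fun t => match t with (j,_,x) => if Nat.eqb j i then x else 0 end) f)).
  { rewrite <- sumR_scal. apply Req_le. apply sumR_ext. intros [[j p] x] Hin.
    destruct (Nat.eqb_spec j i); [|ring]. subst j.
    destruct (Hf1 _ _ _ Hin) as [_ [Hp Hx]].
    destruct Hx as [Hx|Hx]; [|subst; ring].
    assert (E1 := HN i p x Hin Hx p0 Hp0).
    assert (E2 := HN i p0 x0 Hin0 Hx0 p Hp).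
    rewrite !path_cost_Ce in E1, E2. fold d in E1, E2.
    assert (sumR (map (Ce G T f) p) = d) by lra. rewrite H. ring. }
  rewrite Hf2 by auto. rewrite <- (Hg2 i Hi'). rewrite <- sumR_scal.
  apply sumR_le. intros [[j q] x] Hin.
  destruct (Nat.eqb_spec j i); [|lra]. subst j.
  destruct (Hg1 _ _ _ Hin) as [_ [Hq Hx]].
  assert (E := HN i p0 x0 Hin0 Hx0 q Hq). rewrite !path_cost_Ce in E. fold d in E.
  apply Rmult_le_compat_l with (r := x) in E; auto. lra.
Qed.

Lemma eflow_nonneg G h e : feasible G h -> 0 <= eflow h e.
Proof.
  intros [H _]. unfold eflow. apply sumR_nonneg. intros [[j p] x] Hin.
  destruct (H _ _ _ Hin) as [_ [_ Hx]]. destruct (existsb (Nat.eqb e) p); lra.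
Qed.

Lemma tlat_nonneg G g : wf_RP G -> feasible G g -> 0 <= total_latency G g.
Proof.
  intros [He _] Hg. unfold total_latency. apply sumR_nonneg. intros e Hin.
  apply in_seq in Hin. destruct (He e ltac:(lia)) as [_ [_ [Ha Hb]]].
  pose proof (eflow_nonneg G g e Hg). unfold lat.
  apply Rmult_le_pos; auto. apply Rplus_le_le_0_compat; auto. apply Rmult_le_pos; auto.
Qed.

Lemma PoA_mono T v1 v2 : PoA_le T v1 -> v1 <= v2 -> PoA_le T v2.
Proof.
  intros H Hv G f g Hwf HN Hg. specialize (H G f g Hwf HN Hg).
  pose proof (tlat_nonneg G g Hwf Hg). nra.
Qed.

Lemma upper (T : Mechanism) (v mu : R) : 0 <= mu ->
  (forall a b y z, 0<=a -> 0<=b -> 0<=y -> 0<=z ->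
     y*(a*y+b) - v*(z*(a*z+b)) <= mu*((a*y+b) + T a b y)*(y - z)) ->
  PoA_le T v.
Proof.
  intros Hmu H G f g Hwf HN Hg.
  pose proof (VI G T f g Hwf HN Hg) as HVI.
  unfold total_latency.
  assert (Hle : sumR (map (fun e => eflow f e * lat G e (eflow f e)) (seq 0 (nE G)))
     - v * sumR (map (fun e => eflow g e * lat G e (eflow g e)) (seq 0 (nE G)))
     <= mu * (sumR (map (fun e => Ce G T f e * eflow f e) (seq 0 (nE G)))
            - sumR (map (fun e => Ce G T f e * eflow g e) (seq 0 (nE G))))).
  { rewrite <- sumR_scal, <- !sumR_minus, <- sumR_scal.
    apply sumR_le. intros e Hin. apply in_seq in Hin.
    destruct Hwf as [He _]. destruct (He e ltac:(lia)) as [_ [_ [Ha Hb]]].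
    pose proof (eflow_nonneg G f e (proj1 HN)). pose proof (eflow_nonneg G g e Hg).
    specialize (H _ _ (eflow f e) (eflow g e) Ha Hb H0 H1).
    unfold Ce, lat. lra. }
  nra.
Qed.

Lemma key (g v a b y z : R) : 0 <= g <= 1 -> v * (3 + 2*g - g^2) = 4 ->
  0 <= a -> 0 <= b -> 0 <= y -> 0 <= z ->
  y*(a*y+b) - v*(z*(a*z+b)) <= v*((1+g)*a*y+b)*(y-z).
Proof.
  intros Hg Hv Ha Hb Hy Hz.
  assert (HD : 0 < 3 + 2*g - g^2) by nra.
  assert (E : (3 + 2*g - g^2) * (v*((1+g)*a*y+b)*(y-z) - (y*(a*y+b) - v*(z*(a*z+b))))
     = a*((1+g)*y-2*z)^2 + (1-g)^2*b*y).
  { transitivity ((v * (3 + 2*g - g^2)) * ((1+g)*a*y*(y-z) + b*(y-z) + a*z^2 + b*z)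
        - (3 + 2*g - g^2) * (y*(a*y+b))); [ring|]. rewrite Hv. ring. }
  assert (0 <= v*((1+g)*a*y+b)*(y-z) - (y*(a*y+b) - v*(z*(a*z+b)))).
  { apply (Rmult_le_reg_l (3 + 2*g - g^2)); auto. rewrite Rmult_0_r, E.
    apply Rplus_le_le_0_compat. apply Rmult_le_pos; auto. apply pow2_ge_0.
    apply Rmult_le_pos; auto. apply Rmult_le_pos; auto. apply pow2_ge_0. }
  lra.
Qed.

Ltac nodup_tac := repeat constructor; simpl; intros HH;
  repeat (destruct HH as [HH|HH]); try lia; try discriminate; try contradiction.

Definition G1 : RP := mkRP 2 [mkEdge 0 1 1 0] [mkComm 0 1 1].
Definition f1 : Flow := [(0%nat, [0%nat], 1)].

Lemma lb_trivial T v : PoA_le T v -> 1 <= v.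
Proof.
  intros H.
  assert (Hwf : wf_RP G1).
  { split; [|split; [|split]].
    - intros e He. unfold nE in He; simpl in He. assert (e = 0%nat) by lia. subst.
      unfold edge; simpl. repeat split; lia || lra.
    - simpl. nodup_tac.
    - intros i Hi. unfold nC in Hi; simpl in Hi. assert (i = 0%nat) by lia. subst.
      unfold comm; simpl. repeat split; lia || lra.
    - simpl. lra. }
  assert (Hf : feasible G1 f1).
  { split.
    - intros i p x [E|[]]. inversion E; subst. split; [unfold nC; simpl; lia|].
      split; [|lra]. unfold in_Paths, is_path, comm; simpl. split.
      + unfold nE, edge; simpl. repeat split; lia.
      + nodup_tac.
    - intros i Hi. unfold nC in Hi; simpl in Hi. assert (i = 0%nat) by lia. subst.
      unfold comm; simpl. lra. }
  assert (HN : Nash G1 T f1).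
  { split; auto. intros i p x [E|[]] Hx q Hq. inversion E; subst.
    destruct Hq as [Hw _]. unfold comm in Hw; simpl in Hw.
    destruct q as [|e q]; simpl in Hw; [lia|].
    destruct Hw as [He [Ht Hw]]. unfold nE in He; simpl in He.
    assert (e = 0%nat) by lia. subst.
    destruct q as [|e' q]; [lra|].
    simpl in Hw. destruct Hw as [He' [Ht' _]]. unfold nE in He'; simpl in He'.
    assert (e' = 0%nat) by lia. subst. unfold edge in Ht'; simpl in Ht'. lia. }
  specialize (H G1 f1 f1 Hwf HN Hf).
  unfold total_latency, eflow, lat, edge, nE in H; simpl in H. lra.
Qed.

Definition G2 (c : R) : RP :=
  mkRP 3 [mkEdge 0 2 1 0; mkEdge 0 1 0 c; mkEdge 1 2 0 0] [mkComm 0 2 1].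
Definition fN : Flow := [(0%nat, [0%nat], 1)].
Definition gO (y : R) : Flow := [(0%nat, [0%nat], y); (0%nat, [1%nat; 2%nat], 1 - y)].

Lemma lb_pigou T v c y : 0 <= c -> 0 <= y <= 1 ->
  0 <= 1 + T 1 0 1 -> 0 <= c + T 0 c 0 -> 0 <= T 0 0 0 ->
  1 + T 1 0 1 <= c + T 0 c 0 + T 0 0 0 ->
  PoA_le T v -> 1 <= v * (y*y + (1-y)*c).
Proof.
  intros Hc Hy H0 H1 H2 H3 H.
  assert (Hwf : wf_RP (G2 c)).
  { split; [|split; [|split]].
    - intros e He. unfold nE in He; simpl in He.
      destruct e as [|[|[|e]]]; try lia; unfold edge; simpl; repeat split; lia || lra.
    - simpl. nodup_tac.
    - intros i Hi. unfold nC in Hi; simpl in Hi. assert (i = 0%nat) by lia. subst.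
      unfold comm; simpl. repeat split; lia || lra.
    - simpl. lra. }
  assert (P0 : in_Paths (G2 c) 0 [0%nat]).
  { unfold in_Paths, is_path, comm; simpl. split.
    + unfold nE, edge; simpl. repeat split; lia.
    + nodup_tac. }
  assert (P1 : in_Paths (G2 c) 0 [1%nat; 2%nat]).
  { unfold in_Paths, is_path, comm; simpl. split.
    + unfold nE, edge; simpl. repeat split; lia.
    + nodup_tac. }
  assert (Hf : feasible (G2 c) fN).
  { split.
    - intros i p x [E|[]]. inversion E; subst. split; [unfold nC; simpl; lia|].
      split; [auto|lra].
    - intros i Hi. unfold nC in Hi; simpl in Hi. assert (i = 0%nat) by lia. subst.
      unfold comm; simpl. lra. }
  assert (Hg : feasible (G2 c) (gO y)).
  { split.
    - intros i p x [E|[E|[]]]; inversion E; subst; (split; [unfold nC; simpl; lia|]);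
      split; auto; lra.
    - intros i Hi. unfold nC in Hi; simpl in Hi. assert (i = 0%nat) by lia. subst.
      unfold comm; simpl. lra. }
  assert (C0 : Ce (G2 c) T fN 0 = 1 + T 1 0 1).
  { unfold Ce, lat, edge, eflow; simpl. rewrite ?Rplus_0_r. ring. }
  assert (C1 : Ce (G2 c) T fN 1 = c + T 0 c 0).
  { unfold Ce, lat, edge, eflow; simpl. rewrite ?Rplus_0_r. ring_simplify. rewrite ?Rplus_0_r. ring. }
  assert (C2 : Ce (G2 c) T fN 2 = T 0 0 0).
  { unfold Ce, lat, edge, eflow; simpl. rewrite ?Rplus_0_r. ring. }
  assert (Cnn : forall e, (e < nE (G2 c))%nat -> 0 <= Ce (G2 c) T fN e).
  { intros e He. unfold nE in He; simpl in He.
    destruct e as [|[|[|e]]]; try lia; [rewrite C0|rewrite C1|rewrite C2]; lra. }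
  assert (HN : Nash (G2 c) T fN).
  { split; auto. intros i p x [E|[]] Hx q Hq. inversion E; subst.
    rewrite !path_cost_Ce. simpl. rewrite C0.
    destruct Hq as [Hw _]. unfold comm in Hw; simpl in Hw.
    destruct q as [|e q]; simpl in Hw; [lia|].
    destruct Hw as [He [Ht Hw]].
    assert (Hr : 0 <= sumR (map (Ce (G2 c) T fN) q)).
    { apply sumR_nonneg. intros e' He'. apply Cnn. eapply walk_lt; eauto. }
    simpl. unfold nE in He; simpl in He.
    destruct e as [|[|[|e]]]; try lia.
    - rewrite C0. lra.
    - rewrite C1. unfold edge in Hw; simpl in Hw.
      destruct q as [|e' q]; simpl in Hw; [lia|].
      destruct Hw as [He' [Ht' Hw']]. unfold nE in He'; simpl in He'.
      assert (Hr' : 0 <= sumR (map (Ce (G2 c) T fN) q)).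
      { apply sumR_nonneg. intros e2 He2. apply Cnn. eapply walk_lt; eauto. }
      destruct e' as [|[|[|e']]]; try lia; unfold edge in Ht'; simpl in Ht'; try lia.
      simpl. rewrite C2. lra.
    - unfold edge in Ht; simpl in Ht. lia. }
  specialize (H (G2 c) fN (gO y) Hwf HN Hg).
  unfold total_latency, eflow, lat, edge, nE in H; simpl in H.
  replace (y * y + (1 - y) * c) with ((y + (0 + 0)) * (1 * (y + (0 + 0)) + 0) +
     ((0 + ((1 - y) + 0)) * (0 * (0 + ((1 - y) + 0)) + c) +
      ((0 + ((1 - y) + 0)) * (0 * (0 + ((1 - y) + 0)) + 0) + 0))) by ring.
  replace 1 with ((1 + 0) * (1 * (1 + 0) + 0) + ((0 + 0) * (0 * (0 + 0) + c) +
     ((0 + 0) * (0 * (0 + 0) + 0) + 0))) at 1 by ring.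
  exact H.
Qed.

Lemma assemble bnd T p : bnd T -> PoA_le T p ->
  (forall T' v, bnd T' -> PoA_le T' v -> p <= v) ->
  optimal_among bnd T /\ PoA_is T p.
Proof.
  intros HT Hp Hlb. split; [split; auto|split; auto].
  - intros T' HT' v Hv. apply PoA_mono with p; auto. eapply Hlb; eauto.
  - intros v' Hv' Hc. specialize (Hlb T v' HT Hc). lra.
Qed.

Lemma div_le D v : 0 < D -> 4 <= v * D -> 4 / D <= v.
Proof.
  intros HD H. apply (Rmult_le_reg_r D); auto. unfold Rdiv.
  rewrite Rmult_assoc, Rinv_l by lra. lra.
Qed.

Lemma plus_bounded beta : 0 <= beta -> tolling_bounded beta (T_opt_plus beta).
Proof.
  intros Hb a b y Ha Hb' Hy. unfold T_opt_plus. destruct (Rlt_dec beta 1).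
  - assert (0 <= a*y) by nra. split; nra.
  - assert (0 <= a*y) by nra. split; nra.
Qed.

Lemma minus_bounded beta : 0 <= beta -> subsidy_bounded beta (T_opt_minus beta).
Proof.
  intros Hb a b y Ha Hb' Hy. unfold T_opt_minus. assert (0 <= a*y) by nra.
  destruct (Rlt_dec beta (1/2)).
  - split; nra.
  - split; [|lra]. assert (b/2 <= beta * b) by nra. nra.
Qed.

Lemma plus_upper beta : 0 <= beta -> PoA_le (T_opt_plus beta) (poa_plus beta).
Proof.
  intros Hb. unfold poa_plus, T_opt_plus. destruct (Rlt_dec beta 1).
  - set (v := 4 / (3 + 2 * beta - beta ^ 2)).
    assert (HD : 0 < 3 + 2 * beta - beta ^ 2) by nra.
    assert (Hv : v * (3 + 2 * beta - beta ^ 2) = 4) by (unfold v; field; lra).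
    assert (0 <= v) by (unfold v; unfold Rdiv; apply Rmult_le_pos; [lra|left; apply Rinv_0_lt_compat; auto]).
    apply upper with v; auto. intros a b y z Ha Hb' Hy Hz.
    replace (v * (a * y + b + beta * a * y) * (y - z)) with (v * ((1+beta)*a*y+b)*(y-z)) by ring.
    apply key; auto. lra.
  - apply upper with 1; [lra|]. intros a b y z Ha Hb' Hy Hz.
    assert (0 <= a * ((y-z)*(y-z))) by (apply Rmult_le_pos; [lra|apply Rle_0_sqr]).
    match goal with |- ?L <= ?R => assert (R - L = a * ((y-z)*(y-z))) by ring end. lra.
Qed.

Lemma bh_eq beta : beta < 1 -> beta_hat beta = beta / (1 - beta).
Proof. intros; unfold beta_hat; field; lra. Qed.

Lemma minus_upper beta : 0 <= beta -> PoA_le (T_opt_minus beta) (poa_minus beta).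
Proof.
  intros Hb. unfold poa_minus, T_opt_minus. destruct (Rlt_dec beta (1/2)).
  - set (h := beta_hat beta).
    assert (Hh : h * (1 - beta) = beta) by (unfold h; rewrite bh_eq by lra; field; lra).
    assert (Hh0 : 0 <= h <= 1) by nra.
    set (v := 4 / (3 + 2 * h - h ^ 2)).
    assert (HD : 0 < 3 + 2 * h - h ^ 2) by nra.
    assert (Hv : v * (3 + 2 * h - h ^ 2) = 4) by (unfold v; field; lra).
    assert (0 <= v) by (unfold v; unfold Rdiv; apply Rmult_le_pos; [lra|left; apply Rinv_0_lt_compat; auto]).
    apply upper with (v / (1 - beta)).
    { unfold Rdiv; apply Rmult_le_pos; [lra|left; apply Rinv_0_lt_compat; lra]. }
    intros a b y z Ha Hb' Hy Hz.
    replace (v / (1 - beta) * (a * y + b + - (beta * b)) * (y - z))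
      with (v * ((1+h)*a*y+b)*(y-z)).
    + apply key; auto.
    + assert (E : 1 + h = 1 / (1 - beta)) by (unfold h, beta_hat; ring).
      rewrite E. field. lra.
  - apply upper with 2; [lra|]. intros a b y z Ha Hb' Hy Hz.
    assert (0 <= a * ((y-z)*(y-z))) by (apply Rmult_le_pos; [lra|apply Rle_0_sqr]).
    match goal with |- ?L <= ?R => assert (R - L = a * ((y-z)*(y-z))) by (field) end. lra.
Qed.

Lemma plus_lower beta : 0 <= beta ->
  forall T' v, tolling_bounded beta T' -> PoA_le T' v -> poa_plus beta <= v.
Proof.
  intros Hb T' v HT Hv. unfold poa_plus. destruct (Rlt_dec beta 1).
  - assert (HD : 0 < 3 + 2 * beta - beta ^ 2) by nra.
    apply div_le; auto.
    destruct (HT 1 0 1 ltac:(lra) ltac:(lra) ltac:(lra)).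
    destruct (HT 0 (1+beta) 0 ltac:(lra) ltac:(lra) ltac:(lra)).
    destruct (HT 0 0 0 ltac:(lra) ltac:(lra) ltac:(lra)).
    pose proof (lb_pigou T' v (1+beta) ((1+beta)/2) ltac:(lra) ltac:(lra)
      ltac:(lra) ltac:(lra) ltac:(lra) ltac:(lra) Hv).
    replace ((1 + beta) / 2 * ((1 + beta) / 2) + (1 - (1 + beta) / 2) * (1 + beta))
      with ((3 + 2 * beta - beta ^ 2) / 4) in H5 by field.
    replace (v * ((3 + 2 * beta - beta ^ 2) / 4)) with (v * (3 + 2 * beta - beta ^ 2) / 4) in H5 by field.
    lra.
  - eapply lb_trivial; eauto.
Qed.

Lemma minus_lower beta : 0 <= beta ->
  forall T' v, subsidy_bounded beta T' -> PoA_le T' v -> poa_minus beta <= v.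
Proof.
  intros Hb T' v HT Hv. unfold poa_minus. destruct (Rlt_dec beta (1/2)).
  - set (c := 1 / (1 - beta)).
    assert (Hc : c * (1 - beta) = 1) by (unfold c; field; lra).
    assert (Hc1 : 1 <= c <= 2) by nra.
    assert (Hh : beta_hat beta = c - 1) by (unfold beta_hat, c; ring).
    rewrite Hh.
    assert (HD : 0 < 3 + 2 * (c - 1) - (c - 1) ^ 2) by nra.
    apply div_le; auto.
    destruct (HT 1 0 1 ltac:(lra) ltac:(lra) ltac:(lra)).
    destruct (HT 0 c 0 ltac:(lra) ltac:(lra) ltac:(lra)).
    destruct (HT 0 0 0 ltac:(lra) ltac:(lra) ltac:(lra)).
    assert (T' 0 0 0 = 0) by nra.
    pose proof (lb_pigou T' v c (c/2) ltac:(lra) ltac:(lra)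
      ltac:(nra) ltac:(nra) ltac:(lra) ltac:(nra) Hv).
    replace (c / 2 * (c / 2) + (1 - c / 2) * c)
      with ((3 + 2 * (c - 1) - (c - 1) ^ 2) / 4) in H6 by field.
    replace (v * ((3 + 2 * (c-1) - (c-1) ^ 2) / 4)) with (v * (3 + 2 * (c-1) - (c-1) ^ 2) / 4) in H6 by field.
    lra.
  - eapply lb_trivial; eauto.
Qed.

Theorem proposition1 :
  (forall beta : R, 0 <= beta ->
     optimal_among (tolling_bounded beta) (T_opt_plus beta) /\
     PoA_is (T_opt_plus beta) (poa_plus beta) /\
     optimal_among (subsidy_bounded beta) (T_opt_minus beta) /\
     PoA_is (T_opt_minus beta) (poa_minus beta)) /\
  (forall beta : R, 0 < beta < 1 -> poa_minus beta < poa_plus beta).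
Proof.
  split.
  - intros beta Hb.
    destruct (assemble _ _ _ (plus_bounded beta Hb) (plus_upper beta Hb) (plus_lower beta Hb)).
    destruct (assemble _ _ _ (minus_bounded beta Hb) (minus_upper beta Hb) (minus_lower beta Hb)).
    auto.
  - intros beta [H0 H1]. unfold poa_plus, poa_minus.
    destruct (Rlt_dec beta 1); [|lra].
    assert (HD : 0 < 3 + 2 * beta - beta ^ 2) by nra.
    destruct (Rlt_dec beta (1/2)).
    + set (h := beta_hat beta).
      assert (Hh : h * (1 - beta) = beta) by (unfold h; rewrite bh_eq by lra; field; lra).
      assert (Hhb : beta < h) by nra.
      assert (Hh1 : h < 1) by nra.
      assert (HD' : 3 + 2 * beta - beta ^ 2 < 3 + 2 * h - h ^ 2).
      { assert (0 < (h - beta) * (2 - h - beta)) by (apply Rmult_lt_0_compat; lra). nra. }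
      unfold Rdiv. apply Rmult_lt_compat_l; [lra|]. apply Rinv_lt_contravar; nra.
    + apply (Rmult_lt_reg_r (3 + 2 * beta - beta ^ 2)); auto. unfold Rdiv.
      rewrite Rmult_assoc, Rinv_l by lra. nra.
Qed.
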